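(* For every integer $k\geq 6$ and every integer $t$ with $(k-1)(k-2)+1\leq t\leq k(k-1)$, we have $rx_3(K_{2,t})=k$.
   Context: An edge coloring of a graph $G$ is any assignment of colors to the edges (adjacent edges may receive the same color). A tree $T$ in an edge-colored graph is a rainbow tree if no two edges of $T$ have the same color. For $S\subseteq V(G)$, an $S$-tree is a subtree of $G$ containing all vertices of $S$. A $3$-rainbow coloring of $G$ is an edge coloring such that for every set $S$ of $3$ vertices of $G$ there is a rainbow $S$-tree in $G$. The $3$-rainbow index $rx_3(G)$ is the minimum number of colors in a $3$-rainbow coloring of $G$. $K_{2,t}$ denotes the complete bipartite graph with parts of sizes $2$ and $t$. *)

(* Defs.v *)
From mathcomp Require Import all_boot.
Set Implicit Arguments. Unset Strict Implicit. Unset Printing Implicit Defensive.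

(* A simple graph is given by a vertex finType V and a symmetric irreflexive
   adjacency relation adj.  Edges are 2-element vertex sets {x,y} with adj x y. *)
Definition is_edge (V : finType) (adj : rel V) (e : {set V}) : Prop :=
  exists x y, adj x y /\ e = [set x; y].

Definition verts (V : finType) (F : {set {set V}}) : {set V} :=
  \bigcup_(e in F) e.

Definition frel_of (V : finType) (F : {set {set V}}) : rel V :=
  fun x y => (x != y) && ([set x; y] \in F).

Definition connectedF (V : finType) (F : {set {set V}}) : Prop :=
  forall x y, x \in verts F -> y \in verts F -> connect (frel_of F) x y.

Definition acyclicF (V : finType) (F : {set {set V}}) : Prop :=
  forall s : seq V, 3 <= size s -> uniq s -> ~~ cycle (frel_of F) s.

Definition is_subtree (V : finType) (adj : rel V) (F : {set {set V}}) : Prop :=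
  (forall e, e \in F -> is_edge adj e) /\ connectedF F /\ acyclicF F.

(* an edge coloring with (at most) k colors: colors from 'I_k
   (values on non-edges are irrelevant) *)
Definition rainbow (V : finType) (k : nat) (c : {set V} -> 'I_k)
  (F : {set {set V}}) : Prop := {in F &, injective c}.

Definition three_rainbow (V : finType) (adj : rel V) (k : nat)
  (c : {set V} -> 'I_k) : Prop :=
  forall S : {set V}, #|S| = 3 ->
    exists F : {set {set V}},
      [/\ is_subtree adj F, S \subset verts F & rainbow c F].

Definition rx3_is (V : finType) (adj : rel V) (k : nat) : Prop :=
  (exists c : {set V} -> 'I_k, three_rainbow adj c) /\
  (forall j, j < k -> forall c : {set V} -> 'I_j, ~ three_rainbow adj c).

Definition K2t_adj (t : nat) : rel ('I_2 + 'I_t)%type :=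
  fun x y => match x, y with
             | inl _, inr _ => true
             | inr _, inl _ => true
             | _, _ => false
             end.

(* Main.v *)
Require Import Defs.
From mathcomp Require Import all_boot zify.
Set Implicit Arguments. Unset Strict Implicit. Unset Printing Implicit Defensive.

Notation V t := ('I_2 + 'I_t)%type.
Definition edg (t : nat) (h : 'I_2) (w : 'I_t) : {set V t} := [set inl h; inr w].

Lemma edg_inj t (h h' : 'I_2) (w w' : 'I_t) : edg h w = edg h' w' -> h = h' /\ w = w'.
Proof.
move=> E.
have H1 : inl h \in edg h' w' by rewrite -E !inE eqxx.
have H2 : inr w \in edg h' w' by rewrite -E !inE eqxx orbT.
move: H1 H2; rewrite !inE => /orP[/eqP[]->|//] /orP[//|/eqP[]->]; by [].
Qed.

Definition FP t (P : 'I_2 -> 'I_t -> bool) : {set {set V t}} :=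
  [set e | [exists h, exists w, P h w && (e == edg h w)]].

Lemma in_FP t (P : 'I_2 -> 'I_t -> bool) e :
  e \in FP P -> exists h w, P h w /\ e = edg h w.
Proof. by rewrite inE => /existsP[h /existsP[w /andP[H /eqP->]]]; exists h, w. Qed.

Lemma edg_FP t (P : 'I_2 -> 'I_t -> bool) h w : (edg h w \in FP P) = P h w.
Proof.
apply/idP/idP.
  by case/in_FP=> h' [w' [H /edg_inj [->->]]].
by move=> H; rewrite inE; apply/existsP; exists h; apply/existsP; exists w; rewrite H eqxx.
Qed.

Lemma frel_FP t (P : 'I_2 -> 'I_t -> bool) x y : frel_of (FP P) x y ->
  exists h w, P h w /\ ((x = inl h /\ y = inr w) \/ (x = inr w /\ y = inl h)).
Proof.
rewrite /frel_of => /andP[xy /in_FP [h [w [H E]]]]; exists h, w; split=> //.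
have Hx : x \in edg h w by rewrite -E !inE eqxx.
have Hy : y \in edg h w by rewrite -E !inE eqxx orbT.
move: Hx Hy xy; rewrite !inE => /orP[/eqP->|/eqP->] /orP[/eqP->|/eqP->];
  rewrite ?eqxx //; by [left|right].
Qed.

Lemma frel_FP1 t (P : 'I_2 -> 'I_t -> bool) h w : P h w ->
  frel_of (FP P) (inl h) (inr w) /\ frel_of (FP P) (inr w) (inl h).
Proof.
move=> H; rewrite /frel_of; split; apply/andP; split=> //.
  by rewrite -/(edg h w) edg_FP.
by rewrite setUC -/(edg h w) edg_FP.
Qed.

Lemma frel_sym t (F : {set {set V t}}) : symmetric (frel_of F).
Proof. by move=> x y; rewrite /frel_of eq_sym setUC. Qed.

Lemma verts_FP t (P : 'I_2 -> 'I_t -> bool) v :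
  v \in verts (FP P) <-> exists h w, P h w /\ (v = inl h \/ v = inr w).
Proof.
split.
  case/bigcupP=> e /in_FP [h [w [H ->]]]; rewrite !inE => /orP[/eqP->|/eqP->].
    by exists h, w; split=> //; left.
  by exists h, w; split=> //; right.
move=> [h [w [H E]]]; apply/bigcupP; exists (edg h w); first by rewrite edg_FP.
by case: E => ->; rewrite !inE eqxx ?orbT.
Qed.

Lemma I2_cases (h : 'I_2) : h = ord0 \/ h = ord_max.
Proof. by case: h => [[|[|]]] // ?; [left|right]; apply: val_inj. Qed.

Lemma two_hubs t (P : 'I_2 -> 'I_t -> bool) (h h' : 'I_2) w w' :
  h != h' -> P h w -> P h' w' -> (P ord0 w /\ P ord_max w') \/ (P ord0 w' /\ P ord_max w).
Proof.
by case: (I2_cases h) => ->; case: (I2_cases h') => -> //; rewrite ?eqxx //; auto.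
Qed.

Lemma cycle_nbrs (T : eqType) (e : rel T) (s : seq T) : symmetric e ->
  3 <= size s -> uniq s -> cycle e s -> forall z, z \in s ->
  exists p q, [/\ p \in s, q \in s, p != q, e z p & e z q].
Proof.
move=> esym sz us cs z /rot_to [i s' Hr].
have cs' : cycle e (z :: s') by rewrite -Hr rot_cycle.
have us' : uniq (z :: s') by rewrite -Hr rot_uniq.
have sz' : 3 <= size (z :: s') by rewrite -Hr size_rot.
have mem' : forall y, y \in z :: s' -> y \in s by move=> y; rewrite -Hr mem_rot.
case: s' Hr cs' us' sz' mem' => [|p [|r s3]] //= Hr cs' us' sz' mem'.
move: cs' => /=; rewrite rcons_path => /and4P[ezp _ _ elast].
exists p, (last r s3); split.
- by apply: mem'; rewrite !inE eqxx orbT.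
- by apply: mem'; have := mem_last r s3; rewrite !inE => ->; rewrite !orbT.
- move: us' => /and4P[_ pn _ _]; apply: contraNneq pn => ->.
  by rewrite mem_last.
- exact: ezp.
- by rewrite esym.
Qed.

Lemma acyclic_FP t (P : 'I_2 -> 'I_t -> bool) :
  (forall w w', P ord0 w -> P ord_max w -> P ord0 w' -> P ord_max w' -> w = w') ->
  acyclicF (FP P).
Proof.
move=> Hx s sz us; apply/negP => cs.
have nb := cycle_nbrs (@frel_sym t (FP P)) sz us cs.
have Wboth : forall w, inr w \in s -> P ord0 w /\ P ord_max w.
  move=> w /nb [p [q [ps qs pq ep eq]]].
  case/frel_FP: ep => h [w1 [H1 [[//]|[[Ew1] Ep]]]].
  case/frel_FP: eq => h' [w2 [H2 [[//]|[[Ew2] Eq]]]].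
  subst.
  have hh : h != h' by apply: contraNneq pq => ->.
  by case: (two_hubs hh H1 H2) => [[]|[]].
have [z zs] : exists z, z \in s by case: (s) sz => [|z s'] //; exists z; rewrite inE eqxx.
have [h hs] : exists h, inl h \in s.
  case: z zs => [h|w] zs; first by exists h.
  case: (nb _ zs) => p [q [ps _ _ ep _]].
  case/frel_FP: ep => h [w1 [_ [[//]|[_ E]]]]; by exists h; rewrite -E.
case: (nb _ hs) => p [q [ps qs pq ep eq]].
case/frel_FP: ep => h1 [w1 [_ [[_ E1]|[//]]]].
case/frel_FP: eq => h2 [w2 [_ [[_ E2]|[//]]]].
subst p q.
have [a1 b1] := Wboth _ ps.
have [a2 b2] := Wboth _ qs.
by move: pq; rewrite (Hx w1 w2 a1 b1 a2 b2) eqxx.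
Qed.

Lemma connected_FP t (P : 'I_2 -> 'I_t -> bool) :
  ((exists w, P ord0 w) -> (exists w, P ord_max w) -> exists x, P ord0 x && P ord_max x) ->
  connectedF (FP P).
Proof.
move=> Hc.
have hubs : forall h h' w w', P h w -> P h' w' -> connect (frel_of (FP P)) (inl h) (inl h').
  move=> h h' w w' H H'.
  case: (eqVneq h h') => [->|hh]; first exact: connect0.
  have [x /andP[x0 x1]] : exists x, P ord0 x && P ord_max x.
    by apply: Hc; case: (two_hubs hh H H') => [[A B]|[A B]]; eauto.
  have c01 : connect (frel_of (FP P)) (inl ord0) (inl ord_max).
    apply: connect_trans (connect1 (proj1 (frel_FP1 x0))) (connect1 (proj2 (frel_FP1 x1))).
  have c10 : connect (frel_of (FP P)) (inl ord_max) (inl ord0).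
    apply: connect_trans (connect1 (proj1 (frel_FP1 x1))) (connect1 (proj2 (frel_FP1 x0))).
  by case: (I2_cases h) hh => ->; case: (I2_cases h') => -> //; rewrite eqxx.
have toh : forall v, v \in verts (FP P) -> exists h w, P h w /\
    connect (frel_of (FP P)) v (inl h) /\ connect (frel_of (FP P)) (inl h) v.
  move=> v /verts_FP [h [w [H [->|->]]]]; exists h, w; split=> //.
  by split; apply: connect1; [exact: (proj2 (frel_FP1 H)) | exact: (proj1 (frel_FP1 H))].
move=> x y /toh [h [w [H [cx _]]]] /toh [h' [w' [H' [_ cy]]]].
exact: connect_trans cx (connect_trans (hubs _ _ _ _ H H') cy).
Qed.

Lemma subtree_FP t (P : 'I_2 -> 'I_t -> bool) :
  (forall w w', P ord0 w -> P ord_max w -> P ord0 w' -> P ord_max w' -> w = w') ->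
  ((exists w, P ord0 w) -> (exists w, P ord_max w) -> exists x, P ord0 x && P ord_max x) ->
  is_subtree (@K2t_adj t) (FP P).
Proof.
move=> H1 H2; split; last split.
- by move=> e /in_FP [h [w [_ ->]]]; exists (inl h), (inr w).
- exact: connected_FP.
- exact: acyclic_FP.
Qed.


Definition col t k (A B : 'I_t -> 'I_k) (h : 'I_2) (w : 'I_t) : 'I_k :=
  if h == ord0 then A w else B w.

Definition cF t k (A B : 'I_t -> 'I_k) (c0 : 'I_k) (e : {set V t}) : 'I_k :=
  if [pick p : 'I_2 * 'I_t | e == edg p.1 p.2] is Some p then col A B p.1 p.2 else c0.

Lemma cF_edg t k (A B : 'I_t -> 'I_k) c0 h w : cF A B c0 (edg h w) = col A B h w.
Proof.
rewrite /cF; case: pickP => [[h' w'] /= /eqP /edg_inj [->->] //|H].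
by move: (H (h, w)); rewrite /= eqxx.
Qed.

Definition Ps t (s : seq ('I_2 * 'I_t)) : 'I_2 -> 'I_t -> bool := fun h w => (h, w) \in s.

Lemma uniq_map_inj (T1 T2 : eqType) (f : T1 -> T2) s :
  uniq (map f s) -> {in s &, injective f}.
Proof.
elim: s => //= a s IH /andP[Ha Hu] x y; rewrite !inE.
move=> /predU1P[->|Hx] /predU1P[->|Hy] //= Heq.
- by move: Ha; rewrite Heq map_f.
- by move: Ha; rewrite -Heq map_f.
- exact: IH.
Qed.

Lemma rainbow_list t k (A B : 'I_t -> 'I_k) c0 (s : seq ('I_2 * 'I_t)) :
  uniq (map (fun p => col A B p.1 p.2) s) -> rainbow (cF A B c0) (FP (Ps s)).
Proof.
move=> /uniq_map_inj inj e1 e2 /in_FP [h1 [w1 [H1 ->]]] /in_FP [h2 [w2 [H2 ->]]].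
rewrite !cF_edg => E.
by have := inj (h1, w1) (h2, w2) H1 H2 E => -[->->].
Qed.

Definition covers t (s : seq ('I_2 * 'I_t)) (v : V t) :=
  exists h w, (h, w) \in s /\ (v = inl h \/ v = inr w).

Definition Good t k (A B : 'I_t -> 'I_k) (s : seq ('I_2 * 'I_t)) :=
  [/\ uniq (map (fun p => col A B p.1 p.2) s),
      (forall w w', (ord0, w) \in s -> (ord_max, w) \in s ->
          (ord0, w') \in s -> (ord_max, w') \in s -> w = w') &
      ((exists w, (ord0, w) \in s) -> (exists w, (ord_max, w) \in s) ->
          exists x, ((ord0, x) \in s) && ((ord_max, x) \in s))].

Lemma good_ok t k (A B : 'I_t -> 'I_k) c0 s (x y z : V t) :
  Good A B s -> covers s x -> covers s y -> covers s z ->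
  exists F, [/\ is_subtree (@K2t_adj t) F, [set x; y; z] \subset verts F &
     rainbow (cF A B c0) F].
Proof.
case=> [Hu Hb Hc] cx cy cz; exists (FP (Ps s)); split.
- exact: subtree_FP.
- have cv : forall v, covers s v -> v \in verts (FP (Ps s)).
    by move=> v [h [w [H E]]]; apply/verts_FP; exists h, w.
  apply/subsetP; move=> v Hv; rewrite !inE in Hv.
  by case/orP: Hv => [/orP[]|] /eqP ->; apply: cv.
- exact: rainbow_list.
Qed.

Lemma test : (ord0 : 'I_2) == ord_max = false.
Proof. by []. Qed.

Lemma colneq t k (A B : 'I_t -> 'I_k) h h' w :
  (forall w, A w != B w) -> h != h' -> col A B h w != col A B h' w.
Proof.
move=> H1; rewrite /col.
by case: (I2_cases h) => ->; case: (I2_cases h') => ->; rewrite ?eqxx //= => _; rewrite // eq_sym.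
Qed.

Lemma colinj t k (A B : 'I_t -> 'I_k) h h' w w' :
  (forall w w', A w = A w' -> B w = B w' -> w = w') -> h != h' ->
  col A B h w = col A B h w' -> col A B h' w = col A B h' w' -> w = w'.
Proof.
move=> H2; rewrite /col.
by case: (I2_cases h) => ->; case: (I2_cases h') => ->; rewrite ?eqxx //= => _ E1 E2; apply: H2.
Qed.

Lemma good_both t (s : seq ('I_2 * 'I_t)) x0 :
  (forall w, (ord0, w) \in s -> (ord_max, w) \in s -> w = x0) ->
  (forall w w', (ord0, w) \in s -> (ord_max, w) \in s ->
          (ord0, w') \in s -> (ord_max, w') \in s -> w = w').
Proof. by move=> H w w' a b c d; rewrite (H _ a b) (H _ c d). Qed.

Ltac crush := repeat match goal with
 | |- is_true (_ || _) -> _ => case/orP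
 | |- is_true (_ && _) -> _ => case/andP
 | |- is_true (_ == _) -> _ => move/eqP=> ?; subst
 | |- is_true false -> _ => done
 | |- _ -> _ => intro
 end.

Lemma caseC t k (A B : 'I_t -> 'I_k) w :
  (forall w, A w != B w) -> Good A B [:: (ord0, w); (ord_max, w)].
Proof.
move=> H1; split.
- by rewrite /= andbT inE; apply: (colneq _ H1).
- apply: (good_both (x0 := w)) => w'; rewrite !inE !xpair_eqE /=; crush; done.
- by move=> _ _; exists w; rewrite !inE !eqxx.
Qed.

Lemma caseB1 t k (A B : 'I_t -> 'I_k) h w1 w2 :
  col A B h w1 != col A B h w2 -> Good A B [:: (h, w1); (h, w2)].
Proof.
move=> Hn; split.
- by rewrite /= andbT inE.
- apply: (good_both (x0 := w1)) => w'; rewrite !inE !xpair_eqE /=; crush; done.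
- move=> [a Ha] [b Hb]; move: Ha Hb; rewrite !inE !xpair_eqE /=; crush; done.
Qed.

Ltac fin := solve [ done | (match goal with H : is_true (?x != ?x) |- _ => by rewrite eqxx in H end) ].

Lemma caseB2 t k (A B : 'I_t -> 'I_k) h h' w1 w2 :
  (forall w, A w != B w) -> (forall w w', A w = A w' -> B w = B w' -> w = w') ->
  h != h' -> w1 != w2 -> col A B h w1 = col A B h w2 ->
  Good A B [:: (h, w1); (h', w1); (h', w2)].
Proof.
move=> H1 H2 hh ww E; split.
- rewrite /= !inE !andbT negb_or -andbA; apply/and3P; split.
  + by rewrite (colneq _ H1 hh).
  + by rewrite E (colneq _ H1 hh).
  + apply: contra ww => /eqP E'; apply/eqP; exact: (colinj H2 hh E E').
- apply: (good_both (x0 := w1)) => w'; rewrite !inE !xpair_eqE /=; crush; fin.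
- by move=> _ _; exists w1; rewrite !inE !xpair_eqE /=; move: hh;
    case: (I2_cases h) => ->; case: (I2_cases h') => ->; rewrite !eqxx.
Qed.

Lemma caseA t k (A B : 'I_t -> 'I_k) h1 h2 h3 w1 w2 w3 x :
  (forall w, A w != B w) ->
  w1 != w2 -> w1 != w3 -> w2 != w3 ->
  uniq [:: col A B h1 w1; col A B h2 w2; col A B h3 w3] ->
  A x \notin [:: col A B h1 w1; col A B h2 w2; col A B h3 w3] ->
  B x \notin [:: col A B h1 w1; col A B h2 w2; col A B h3 w3] ->
  Good A B [:: (h1, w1); (h2, w2); (h3, w3); (ord0, x); (ord_max, x)].
Proof.
move=> H1 n12 n13 n23 Hu Ha Hb.
have nx : forall h w, col A B h w \in [:: col A B h1 w1; col A B h2 w2; col A B h3 w3] -> w != x.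
  move=> h w Hin; apply/negP => /eqP Ewx; subst w.
  by case: (I2_cases h) Hin => -> Hin; [move: Ha | move: Hb]; rewrite /col /= in Hin *; rewrite Hin.
have x1 : w1 != x by apply: (nx h1); rewrite !inE eqxx.
have x2 : w2 != x by apply: (nx h2); rewrite !inE eqxx orbT.
have x3 : w3 != x by apply: (nx h3); rewrite !inE eqxx !orbT.
split.
- have -> : map (fun p => col A B p.1 p.2) [:: (h1, w1); (h2, w2); (h3, w3); (ord0, x); (ord_max, x)]
     = [:: col A B h1 w1; col A B h2 w2; col A B h3 w3] ++ [:: A x; B x] by [].
  rewrite cat_uniq Hu /= (negbTE Ha) (negbTE Hb) /= andbT inE.
  exact: H1.
- apply: (good_both (x0 := x)) => w'; rewrite !inE !xpair_eqE /=; crush; fin.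
- by move=> _ _; exists x; rewrite !inE !eqxx !orbT.
Qed.

Definition sdr t k (A B : 'I_t -> 'I_k) w1 w2 w3 :=
  exists h1 h2 h3, [/\ col A B h1 w1 != col A B h2 w2,
     col A B h1 w1 != col A B h3 w3 & col A B h2 w2 != col A B h3 w3].

Lemma sdr_aux t k (A B : 'I_t -> 'I_k) w1 w2 w3 :
  (forall w, A w != B w) -> (forall w w', A w = A w' -> B w = B w' -> w = w') ->
  w1 != w2 -> w1 != w3 -> w2 != w3 -> A w1 = A w2 -> sdr A B w1 w2 w3.
Proof.
move=> H1 H2 n12 n13 n23 E12.
have ab2 : A w1 != B w2 by rewrite E12 H1.
case: (boolP ((A w3 != A w1) && (A w3 != B w2))) => [/andP[a b]|C1].
  by exists ord0, ord_max, ord0; split; rewrite /col //= eq_sym.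
case: (boolP ((B w3 != A w1) && (B w3 != B w2))) => [/andP[a b]|C2].
  by exists ord0, ord_max, ord_max; split; rewrite /col //= eq_sym.
move: C1 C2; rewrite !negb_and !negbK => C1 C2.
case: (eqVneq (A w3) (A w1)) => [Ea|Na].
  have Eb : B w3 = B w2.
    case/orP: C2 => /eqP // Eb; by move: (H1 w3); rewrite Ea Eb eqxx.
  by move: n23; rewrite (H2 w3 w2) ?eqxx // Ea.
move: C1; rewrite (negbTE Na) /= => /eqP Ea.
have Eb : B w3 = A w1.
  case/orP: C2 => /eqP // Eb; by move: (H1 w3); rewrite Ea Eb eqxx.
exists ord_max, ord0, ord0; split; rewrite /col //=.
- by rewrite -E12 eq_sym H1.
- apply/eqP => E; move: n12; rewrite (H2 w1 w2) ?eqxx //; by rewrite E -Ea.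
- by rewrite Ea -E12.
Qed.

Lemma sdr_all t k (A B : 'I_t -> 'I_k) w1 w2 w3 :
  (forall w, A w != B w) -> (forall w w', A w = A w' -> B w = B w' -> w = w') ->
  w1 != w2 -> w1 != w3 -> w2 != w3 -> sdr A B w1 w2 w3.
Proof.
move=> H1 H2 n12 n13 n23.
case: (eqVneq (A w1) (A w2)) => [E|N12]; first exact: sdr_aux.
have n21 : w2 != w1 by rewrite eq_sym.
have n31 : w3 != w1 by rewrite eq_sym.
have n32 : w3 != w2 by rewrite eq_sym.
case: (eqVneq (A w1) (A w3)) => [E|N13].
  have [h1 [h3 [h2 [a b c]]]] := sdr_aux H1 H2 n13 n12 n32 E.
  by exists h1, h2, h3; split; rewrite // eq_sym.
case: (eqVneq (A w2) (A w3)) => [E|N23].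
  have [h2 [h3 [h1 [a b c]]]] := sdr_aux H1 H2 n23 n21 n31 E.
  by exists h1, h2, h3; split; rewrite // eq_sym.
by exists ord0, ord0, ord0; split.
Qed.

Definition Tok t k (A B : 'I_t -> 'I_k) (x y z : V t) :=
  exists s, [/\ Good A B s, covers s x, covers s y & covers s z].

Lemma Tok12 t k (A B : 'I_t -> 'I_k) x y z : Tok A B x y z -> Tok A B y x z.
Proof. by case=> s [a b c d]; exists s. Qed.
Lemma Tok23 t k (A B : 'I_t -> 'I_k) x y z : Tok A B x y z -> Tok A B x z y.
Proof. by case=> s [a b c d]; exists s. Qed.

Definition oth (h : 'I_2) : 'I_2 := if h == ord0 then ord_max else ord0.
Lemma oth_neq h : h != oth h.
Proof. by case: (I2_cases h) => ->. Qed.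

Lemma tokC (t k : nat) (A B : 'I_t -> 'I_k)
  (H1 : forall w, A w != B w)
  (H2 : forall w w', A w = A w' -> B w = B w' -> w = w')
  (H3 : forall c1 c2 c3 : 'I_k, exists x,
     A x \notin [:: c1; c2; c3] /\ B x \notin [:: c1; c2; c3]) h h' w : h != h' -> Tok A B (inl h) (inl h') (inr w).
Proof.
move=> hh; exists [:: (ord0, w); (ord_max, w)]; split; first exact: caseC.
- by exists h, w; split; [case: (I2_cases h) => ->; rewrite !inE eqxx ?orbT | left].
- by exists h', w; split; [case: (I2_cases h') => ->; rewrite !inE eqxx ?orbT | left].
- by exists ord0, w; split; [rewrite !inE eqxx | right].
Qed.

Lemma tokB (t k : nat) (A B : 'I_t -> 'I_k)
  (H1 : forall w, A w != B w)
  (H2 : forall w w', A w = A w' -> B w = B w' -> w = w')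
  (H3 : forall c1 c2 c3 : 'I_k, exists x,
     A x \notin [:: c1; c2; c3] /\ B x \notin [:: c1; c2; c3]) h w1 w2 : w1 != w2 -> Tok A B (inl h) (inr w1) (inr w2).
Proof.
move=> ww; case: (eqVneq (col A B h w1) (col A B h w2)) => [E|N].
  exists [:: (h, w1); (oth h, w1); (oth h, w2)]; split.
  - exact: caseB2 (oth_neq h) ww E.
  - by exists h, w1; split; [rewrite !inE eqxx | left].
  - by exists h, w1; split; [rewrite !inE eqxx | right].
  - by exists (oth h), w2; split; [rewrite !inE eqxx !orbT | right].
exists [:: (h, w1); (h, w2)]; split.
- exact: caseB1.
- by exists h, w1; split; [rewrite !inE eqxx | left].
- by exists h, w1; split; [rewrite !inE eqxx | right].
- by exists h, w2; split; [rewrite !inE eqxx !orbT | right].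
Qed.

Lemma tokA (t k : nat) (A B : 'I_t -> 'I_k)
  (H1 : forall w, A w != B w)
  (H2 : forall w w', A w = A w' -> B w = B w' -> w = w')
  (H3 : forall c1 c2 c3 : 'I_k, exists x,
     A x \notin [:: c1; c2; c3] /\ B x \notin [:: c1; c2; c3]) w1 w2 w3 : w1 != w2 -> w1 != w3 -> w2 != w3 ->
  Tok A B (inr w1) (inr w2) (inr w3).
Proof.
move=> n12 n13 n23.
have [h1 [h2 [h3 [a b c]]]] := sdr_all H1 H2 n12 n13 n23.
have [x [Ha Hb]] := H3 (col A B h1 w1) (col A B h2 w2) (col A B h3 w3).
exists [:: (h1, w1); (h2, w2); (h3, w3); (ord0, x); (ord_max, x)]; split.
- apply: caseA => //; by rewrite /= !inE negb_or a b c.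
- by exists h1, w1; split; [rewrite !inE eqxx | right].
- by exists h2, w2; split; [rewrite !inE eqxx !orbT | right].
- by exists h3, w3; split; [rewrite !inE eqxx !orbT | right].
Qed.

Lemma tok_all (t k : nat) (A B : 'I_t -> 'I_k)
  (H1 : forall w, A w != B w)
  (H2 : forall w w', A w = A w' -> B w = B w' -> w = w')
  (H3 : forall c1 c2 c3 : 'I_k, exists x,
     A x \notin [:: c1; c2; c3] /\ B x \notin [:: c1; c2; c3]) (x y z : V t) : x != y -> x != z -> y != z -> Tok A B x y z.
Proof.
case: x => [hx|wx]; case: y => [hy|wy]; case: z => [hz|wz] => nxy nxz nyz.
- exfalso; move: nxy nxz nyz.
  by case: (I2_cases hx) => ->; case: (I2_cases hy) => ->; case: (I2_cases hz) => ->.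
- by apply: (tokC H1 H2 H3); apply: contra nxy => /eqP ->.
- by apply: Tok23; apply: (tokC H1 H2 H3); apply: contra nxz => /eqP ->.
- by apply: (tokB H1 H2 H3); apply: contra nyz => /eqP ->.
- by apply: Tok12; apply: Tok23; apply: Tok12; apply: (tokC H1 H2 H3); apply: contra nyz => /eqP ->.
- by apply: Tok12; apply: (tokB H1 H2 H3); apply: contra nxz => /eqP ->.
- by apply: Tok23; apply: Tok12; apply: (tokB H1 H2 H3); apply: contra nxy => /eqP ->.
- by apply: (tokA H1 H2 H3); [apply: contra nxy | apply: contra nxz | apply: contra nyz] => /eqP ->.
Qed.

Lemma rainbow_ok (t k : nat) (A B : 'I_t -> 'I_k)
  (H1 : forall w, A w != B w)
  (H2 : forall w w', A w = A w' -> B w = B w' -> w = w')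
  (H3 : forall c1 c2 c3 : 'I_k, exists x,
     A x \notin [:: c1; c2; c3] /\ B x \notin [:: c1; c2; c3]) (c0 : 'I_k) : three_rainbow (@K2t_adj t) (cF A B c0).
Proof.
move=> S cS.
have [x xS] : exists x, x \in S by apply/set0Pn; rewrite -card_gt0 cS.
have /cards2P [y [z [yz E]]] : #|S :\ x| == 2.
  by move: cS; rewrite (cardsD1 x S) xS add1n => -[->].
have xy : x != y.
  apply/eqP => Exy; have : y \in S :\ x by rewrite E !inE eqxx.
  by rewrite -Exy setD11.
have xz : x != z.
  apply/eqP => Exz; have : z \in S :\ x by rewrite E !inE eqxx orbT.
  by rewrite -Exz setD11.
have [s [G cx cy cz]] := tok_all H1 H2 H3 xy xz yz.
have [F [HF sub R]] := good_ok c0 G cx cy cz.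
exists F; split=> //.
by rewrite -(setD1K xS) E setUA.
Qed.

Definition anat (m i : nat) : nat :=
  if i < m * (m - 1) then (i %/ (m - 1)).+1
  else if i - m * (m - 1) < m then 0 else (i - m * (m - 1) - m).+1.

Definition bnat (m i : nat) : nat :=
  if i < m * (m - 1) then
    (if i %% (m - 1) < i %/ (m - 1) then (i %% (m - 1)).+1 else (i %% (m - 1)).+2)
  else if i - m * (m - 1) < m then (i - m * (m - 1)).+1 else 0.

Lemma decode m i : 2 <= m -> i < m * (m - 1) ->
  exists q r, [/\ i = q * (m - 1) + r, r < m - 1, q < m, i %/ (m - 1) = q & i %% (m - 1) = r].
Proof.
move=> m2 lt; exists (i %/ (m - 1)), (i %% (m - 1)); split=> //.
- exact: divn_eq.
- by rewrite ltn_mod; lia.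
- by rewrite ltn_divLR; last lia.
Qed.

Lemma ab_bound m i : 2 <= m -> i < m * (m + 1) -> anat m i <= m /\ bnat m i <= m.
Proof.
move=> m2 lt; rewrite /anat /bnat; case: ifP => [H|H].
  have [q [r [E rl ql -> ->]]] := decode m2 H.
  by case: ifP => Hc; split; lia.
have e : m * (m + 1) = m * (m - 1) + m * 2 by rewrite -mulnDr; congr (_ * _); lia.
move: lt H; rewrite e; move: (m * (m - 1)) => M lt H.
by case: ifP => Hc; split; lia.
Qed.

Lemma ab_neq m i : 2 <= m -> anat m i != bnat m i.
Proof.
move=> m2; rewrite /anat /bnat; case: ifP => [H|H].
  have [q [r [E rl ql -> ->]]] := decode m2 H.
  by case: ifP => Hc; apply/eqP; lia.
by case: ifP.
Qed.

Lemma ab_inj m i j : 2 <= m -> anat m i = anat m j -> bnat m i = bnat m j -> i = j.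
Proof.
move=> m2; rewrite /anat /bnat.
case: (boolP (i < m * (m - 1))) => Hi; case: (boolP (j < m * (m - 1))) => Hj;
  rewrite ?Hi ?Hj ?(negbTE Hi) ?(negbTE Hj).
- have [q [r [E rl ql -> ->]]] := decode m2 Hi.
  have [q' [r' [E' rl' ql' -> ->]]] := decode m2 Hj.
  case=> Eq; subst q' i j.
  by case: ifP => ?; case: ifP => ? ?; lia.
- have [q [r [E rl ql -> ->]]] := decode m2 Hi.
  by do ![case: ifP => ?] => //.
- have [q' [r' [E' rl' ql' -> ->]]] := decode m2 Hj.
  by do ![case: ifP => ?] => //.
- do ![case: ifP => ?] => //= ? ?; lia.
Qed.

Lemma ab_surj m a b : 2 <= m -> 1 <= a <= m -> 1 <= b <= m -> a != b ->
  exists i, i < m * (m - 1) /\ anat m i = a /\ bnat m i = b.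
Proof.
move=> m2 Ha Hb ab.
pose r := if b < a then b.-1 else b.-2.
have rl : r < m - 1 by rewrite /r; case: ifP => Hc; lia.
have dv : (a.-1 * (m - 1) + r) %/ (m - 1) = a.-1.
  by rewrite divnMDl ?divn_small //; lia.
have md : (a.-1 * (m - 1) + r) %% (m - 1) = r by rewrite modnMDl modn_small.
have lt : a.-1 * (m - 1) + r < m * (m - 1).
  have : a.-1 * (m - 1) <= (m - 1) * (m - 1) by rewrite leq_mul2r; apply/orP; right; lia.
  nia.
exists (a.-1 * (m - 1) + r); split=> //.
rewrite /anat /bnat lt dv md; split; first lia.
by rewrite /r; case: (ltnP b a) => H'; case: ifP => H; lia.
Qed.

Definition avoid4 (x y z u : nat) : nat :=
  if 1 \notin [:: x; y; z; u] then 1 else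
  if 2 \notin [:: x; y; z; u] then 2 else
  if 3 \notin [:: x; y; z; u] then 3 else
  if 4 \notin [:: x; y; z; u] then 4 else 5.

Lemma avoid4P x y z u : let r := avoid4 x y z u in
  [/\ 1 <= r <= 5, r != x, r != y, r != z & r != u].
Proof.
rewrite /avoid4 !inE.
by do ![case: ifP => ?] => /=; split; lia.
Qed.

Definition Acol m t (w : 'I_t) : 'I_m.+1 := inord (anat m w).
Definition Bcol m t (w : 'I_t) : 'I_m.+1 := inord (bnat m w).

Lemma inord_eq m a (c : 'I_m.+1) : a <= m -> (inord a == c) = (a == val c).
Proof. by move=> am; rewrite -(inj_eq val_inj) /= inordK. Qed.

Lemma H1c m t : 2 <= m -> t <= m * (m + 1) -> forall w : 'I_t, Acol m w != Bcol m w.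
Proof.
move=> m2 tl w; have [ba bb] := ab_bound m2 (leq_trans (ltn_ord w) tl).
by rewrite /Acol inord_eq // /= inordK ?ltnS // ab_neq.
Qed.

Lemma H2c m t : 2 <= m -> t <= m * (m + 1) -> forall w w' : 'I_t,
  Acol m w = Acol m w' -> Bcol m w = Bcol m w' -> w = w'.
Proof.
move=> m2 tl w w'.
have [ba bb] := ab_bound m2 (leq_trans (ltn_ord w) tl).
have [ba' bb'] := ab_bound m2 (leq_trans (ltn_ord w') tl).
move=> /(congr1 val) /= Ea /(congr1 val) /= Eb; apply: val_inj.
move: Ea Eb; rewrite !inordK ?ltnS //; exact: ab_inj.
Qed.

Lemma H3c m t : 5 <= m -> m * (m - 1) < t -> forall c1 c2 c3 : 'I_m.+1, exists x : 'I_t,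
  Acol m x \notin [:: c1; c2; c3] /\ Bcol m x \notin [:: c1; c2; c3].
Proof.
move=> m5 tl c1 c2 c3.
pose a := avoid4 c1 c2 c3 c1; pose b := avoid4 c1 c2 c3 a.
have [Ha a1 a2 a3 _] := avoid4P c1 c2 c3 c1.
have [Hb b1 b2 b3 ba] := avoid4P c1 c2 c3 a.
rewrite -/a in Ha a1 a2 a3; rewrite -/b in Hb b1 b2 b3 ba.
have [i [il [Ea Eb]]] : exists i, i < m * (m - 1) /\ anat m i = a /\ bnat m i = b.
  by apply: ab_surj; try lia; rewrite eq_sym.

have it : i < t by lia.
exists (Ordinal it); rewrite /Acol /Bcol /= Ea Eb !inE !inord_eq; try lia.
by rewrite !negb_or a1 a2 a3 b1 b2 b3.
Qed.

Lemma card3 (T : finType) (x y z : T) : x != y -> x != z -> y != z -> #|[set x; y; z]| = 3.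
Proof.
move=> xy xz yz; rewrite -setUA cardsU1 cards2 yz !inE negb_or xy xz.
by [].
Qed.

Lemma edge_at t (F : {set {set V t}}) w :
  (forall e, e \in F -> is_edge (@K2t_adj t) e) -> inr w \in verts F ->
  exists h, edg h w \in F.
Proof.
move=> He /bigcupP [e eF we].
have [x [y [adj E]]] := He e eF.
move: we; rewrite E !inE => /orP[/eqP Ex|/eqP Ey].
- subst x; case: y adj E => // h _ E; exists h.
  by rewrite /edg setUC -E.
- subst y; case: x adj E => // h _ E; exists h.
  by rewrite /edg -E.
Qed.

Lemma pigeon3 t j (c : {set V t} -> 'I_j) (w1 w2 w3 : 'I_t) (a b : 'I_j) :
  three_rainbow (@K2t_adj t) c -> w1 != w2 -> w1 != w3 -> w2 != w3 ->
  (forall h w, w \in [:: w1; w2; w3] -> (c (edg h w) == a) || (c (edg h w) == b)) -> False.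
Proof.
move=> T3 n12 n13 n23 Hc.
have n12' : inr w1 != inr w2 :> V t by [].
have n13' : inr w1 != inr w3 :> V t by [].
have n23' : inr w2 != inr w3 :> V t by [].
have [F [[He _] sub R]] := T3 _ (card3 n12' n13' n23').
have inv : forall w, w \in [:: w1; w2; w3] -> inr w \in verts F.
  by move=> w; rewrite !inE => /orP[|/orP[]] /eqP ->; apply: (subsetP sub); rewrite !inE eqxx ?orbT.
have m1 : w1 \in [:: w1; w2; w3] by rewrite !inE eqxx.
have m2 : w2 \in [:: w1; w2; w3] by rewrite !inE eqxx orbT.
have m3 : w3 \in [:: w1; w2; w3] by rewrite !inE eqxx !orbT.
have [h1 e1] := edge_at He (inv w1 m1).
have [h2 e2] := edge_at He (inv w2 m2).
have [h3 e3] := edge_at He (inv w3 m3).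
have c1 := Hc h1 w1 m1.
have c2 := Hc h2 w2 m2.
have c3 := Hc h3 w3 m3.
have neq : forall h h' (w w' : 'I_t), w != w' -> edg h w \in F -> edg h' w' \in F ->
    c (edg h w) != c (edg h' w').
  move=> h h' w w' ww ein ein'; apply/eqP => E.
  by move: ww; have [_ ->] := edg_inj (R _ _ ein ein' E); rewrite eqxx.
have d12 := neq _ _ _ _ n12 e1 e2.
have d13 := neq _ _ _ _ n13 e1 e3.
have d23 := neq _ _ _ _ n23 e2 e3.
move: c1 c2 c3 d12 d13 d23.
by case/orP=> /eqP ->; case/orP=> /eqP ->; case/orP=> /eqP ->; rewrite ?eqxx.
Qed.

Lemma pigeon2 t j (c : {set V t} -> 'I_j) (w1 w2 : 'I_t) (a : 'I_j) :
  three_rainbow (@K2t_adj t) c -> w1 != w2 ->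
  (forall h w, w \in [:: w1; w2] -> c (edg h w) = a) -> False.
Proof.
move=> T3 n12 Hc.
have n12' : inr w1 != inr w2 :> V t by [].
have n13' : inr w1 != inl ord0 :> V t by [].
have n23' : inr w2 != inl ord0 :> V t by [].
have [F [[He _] sub R]] := T3 _ (card3 n12' n13' n23').
have s1 : inr w1 \in [set inr w1; inr w2; inl (ord0 : 'I_2)] by rewrite !inE eqxx.
have s2 : inr w2 \in [set inr w1; inr w2; inl (ord0 : 'I_2)] by rewrite !inE eqxx ?orbT.
have [h1 e1] := edge_at He (subsetP sub _ s1).
have [h2 e2] := edge_at He (subsetP sub _ s2).
have E : c (edg h1 w1) = c (edg h2 w2).
  by rewrite (Hc h1 w1) ?(Hc h2 w2) // ?inE ?eqxx ?orbT.
by move: n12; have [_ ->] := edg_inj (R _ _ e1 e2 E); rewrite eqxx.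
Qed.

Lemma bin2_mul2 n : 'C(n, 2) * 2 = n * (n - 1).
Proof.
elim: n => // n IH; rewrite binS bin1 mulnDl IH.
case: n IH => // n _; rewrite subSS subn0 !mulSn !mulnS; lia.
Qed.

Lemma lower t j (c : {set V t} -> 'I_j) : three_rainbow (@K2t_adj t) c -> 2 <= j ->
  t <= j * (j - 1).
Proof.
move=> T3 j2.
pose a w := c (edg ord0 w); pose b w := c (edg ord_max w).
pose T2 := [set T : {set 'I_j} | #|T| == 2].
pose Fn (T : {set 'I_j}) (w : 'I_t) := if (a w \in T) && (b w \in T) then 1 else 0.
have up : forall T, T \in T2 -> \sum_w Fn T w <= 2.
  move=> T; rewrite inE => /cards2P [p [q [pq ET]]].
  have E1 : \sum_w Fn T w = #|[set w | (a w \in T) && (b w \in T)]|.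
    by rewrite -sum1_card [RHS]big_mkcond /=; apply: eq_bigr => w _; rewrite inE.
  rewrite E1 leqNgt; apply/negP => /card_gt2P [x [y [z [[hx hy hz] [xy yz zx]]]]].
  have xz : x != z by rewrite eq_sym.
  apply: (pigeon3 (a := p) (b := q) T3 xy xz yz).
  move=> h w; rewrite !inE => /orP[|/orP[]] /eqP ->;
    [move: hx | move: hy | move: hz]; rewrite !inE ET !inE => /andP[ha hb];
    by case: (I2_cases h) => ->.
have low : forall w, 1 <= \sum_(T in T2) Fn T w.
  move=> w.
  have [T0 [HT0 HF]] : exists T0, T0 \in T2 /\ Fn T0 w = 1.
    case: (eqVneq (a w) (b w)) => [Eab|Nab].
      have [o ow] : exists o : 'I_j, o != a w.
        pose o0 : 'I_j := Ordinal (leq_trans (isT : 0 < 2) j2).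
        pose o1 : 'I_j := Ordinal j2.
        case: (eqVneq (a w) o0) => [E|N]; last by exists o0; rewrite eq_sym.
        by exists o1; rewrite E.
      exists [set a w; o]; rewrite inE cards2 (eq_sym (a w) o) ow /Fn -Eab !inE eqxx; split=> //.
    exists [set a w; b w]; rewrite inE cards2 Nab /Fn !inE !eqxx ?orbT; split=> //.
  by rewrite (bigD1 T0) //= HF.
have : \sum_(w : 'I_t) 1 <= \sum_(T in T2) 2.
  apply: (@leq_trans (\sum_(w : 'I_t) \sum_(T in T2) Fn T w)).
    by apply: leq_sum => w _; exact: low.
  by rewrite exchange_big; apply: leq_sum => T HT; exact: up.
rewrite sum_nat_const card_draws card_ord bin2_mul2 sum1_card card_ord.
by [].
Qed.

Theorem lemma6 (k t : nat) :
  6 <= k -> (k - 1) * (k - 2) + 1 <= t <= k * (k - 1) ->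
  rx3_is (@K2t_adj t) k.
Proof.
move=> k6 /andP[tl tu]; split.
- case: k k6 tl tu => // m k6 tl tu.
  have m5 : 5 <= m by lia.
  have e1 : m.+1 - 1 = m by lia.
  have e2 : m.+1 - 2 = m - 1 by lia.
  rewrite e1 e2 in tl tu.
  have tu' : t <= m * (m + 1) by rewrite mulnC addn1.
  have tl' : m * (m - 1) < t by rewrite addn1 in tl.
  exists (cF (Acol m (t:=t)) (Bcol m (t:=t)) ord0).
  apply: rainbow_ok.
  + exact: H1c (leq_trans (isT : 2 <= 5) m5) tu'.
  + exact: H2c (leq_trans (isT : 2 <= 5) m5) tu'.
  + exact: H3c m5 tl'.
- move=> j jk c T3.
  case: (leqP 2 j) => j2.
    have := lower T3 j2.
    have : j * (j - 1) <= (k - 1) * (k - 2) by apply: leq_mul; lia.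
    lia.
  have t2 : 1 < t by lia.
  case: j jk c T3 j2 => [|[|//]] jk c T3 _.
    by case: (c set0).
  have n01 : (Ordinal (ltnW t2)) != (Ordinal t2) by [].
  by apply: (pigeon2 (a := ord0) T3 n01) => h w _; rewrite ord1.
Qed.
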